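(* Let $q$ be odd and let $\mathcal U$ be a conic-BM unital with respect to $\ell_\infty$ in $\mathrm{PG}(2,q^2)$. Then for every point $Q\notin\mathcal U\cup\ell_\infty$, $\mathrm{pedal}(Q)$ is an arc.
   Context: Points of $\mathrm{PG}(2,q^2)$ have homogeneous coordinates $(x,y,z)$; $\ell_\infty$ is the line $z=0$. For $\alpha,\beta\in\mathbb{F}_{q^2}$ with $(\beta^q-\beta)^2+4\alpha^{q+1}$ a nonsquare in $\mathbb{F}_q$, the set $\mathcal U_{\alpha\beta}=\{(x,\alpha x^2+\beta x^{q+1}+r,1): x\in\mathbb{F}_{q^2}, r\in\mathbb{F}_q\}\cup\{(0,1,0)\}$ is an orthogonal Buekenhout–Metz unital with respect to $\ell_\infty$ (a set of $q^3+1$ points meeting every line in $1$ or $q+1$ points). A conic-BM unital with respect to $\ell_\infty$ is such a unital which contains a non-degenerate conic, equivalently one which is the union of $q$ non-degenerate conics pairwise meeting in the point $(0,1,0)$; up to a collineation fixing $\ell_\infty$ these are exactly the sets $\mathcal U_{\alpha\beta}$ with $\beta\in\mathbb{F}_q$. For a point $Q$ not on the unital, $\mathrm{pedal}(Q)$ is the set of points of contact of the $q+1$ tangent lines (lines meeting the unital in exactly one point) through $Q$. An arc is a set meeting every line in at most $2$ points. *)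

(* Defs.v *)
(* Projective plane PG(2,F) over a finite field F with |F| = q^2.
   Points: nonzero column vectors 'cV[F]_3 (homogeneous coordinates (x,y,z)),
   two vectors representing the same point iff proportional.
   Lines: nonzero row vectors l, incidence l *m v = 0.
   Point sets are predicates on vectors (only nonzero vectors are members). *)
From HB Require Import structures.
From mathcomp Require Import all_boot all_order all_algebra.
Set Implicit Arguments. Unset Strict Implicit. Unset Printing Implicit Defensive.
Import Order.TTheory GRing.Theory Num.Theory.
Local Open Scope ring_scope.

Section PG2.
Variable F : fieldType.

Definition pset := 'cV[F]_3 -> Prop.

Definition vec3 (x y z : F) : 'cV[F]_3 := \col_(i < 3) nth 0 [:: x; y; z] i.

Definition zc (v : 'cV[F]_3) : F := v (inord 2) 0.

Definition same_pt (u v : 'cV[F]_3) : Prop := exists2 k : F, k != 0 & u = k *: v.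

Definition on_line (l : 'rV[F]_3) (v : 'cV[F]_3) : Prop := l *m v = 0.

Definition inFq (q : nat) (x : F) : Prop := x ^+ q = x.

Definition nonsquare_Fq (q : nat) (d : F) : Prop :=
  inFq q d /\ ~ (exists y, inFq q y /\ y ^+ 2 = d).

Definition BMset (q : nat) (a b : F) : pset := fun v =>
  v != 0 /\
  ((exists x r, inFq q r /\
        same_pt v (vec3 x (a * x ^+ 2 + b * x ^+ q.+1 + r) 1))
   \/ same_pt v (vec3 0 1 0)).

Definition BM_cond (q : nat) (a b : F) : Prop :=
  nonsquare_Fq q ((b ^+ q - b) ^+ 2 + 4%:R * a ^+ q.+1).

Definition coll_image (A : 'M[F]_3) (s : {rmorphism F -> F}) (S : pset) : pset :=
  fun v => v != 0 /\ exists w, S w /\ same_pt v (A *m map_mx s w).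

Definition fixes_linf (A : 'M[F]_3) : Prop :=
  forall v, zc v = 0 -> zc (A *m v) = 0.

Definition orthBM (q : nat) (U : pset) : Prop :=
  exists (a b : F) (A : 'M[F]_3) (s : {rmorphism F -> F}),
    [/\ BM_cond q a b, A \in unitmx, fixes_linf A &
        forall v, U v <-> coll_image A s (BMset q a b) v].

Definition conic (M : 'M[F]_3) : pset := fun v => v != 0 /\ v^T *m M *m v = 0.

Definition nondeg_conic_in (U : pset) : Prop :=
  exists M : 'M[F]_3, [/\ M^T = M, \det M != 0 & forall v, conic M v -> U v].

Definition conicBM (q : nat) (U : pset) : Prop := orthBM q U /\ nondeg_conic_in U.

Definition tangent (U : pset) (l : 'rV[F]_3) : Prop :=
  l != 0 /\ exists v, [/\ U v, on_line l v &
                          forall w, U w -> on_line l w -> same_pt w v].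

Definition pedal (U : pset) (Q : 'cV[F]_3) : pset := fun P =>
  U P /\ exists l, [/\ tangent U l, on_line l Q & on_line l P].

Definition is_arc (S : pset) : Prop :=
  forall (l : 'rV[F]_3) u v w, l != 0 -> S u -> S v -> S w ->
    on_line l u -> on_line l v -> on_line l w ->
    [\/ same_pt u v, same_pt v w | same_pt u w].

End PG2.

(* Main.v *)
Require Import Defs.
From HB Require Import structures.
From mathcomp Require Import all_boot all_order all_algebra all_fingroup all_solvable all_field.
From mathcomp Require Import ring zify.
Set Implicit Arguments. Unset Strict Implicit. Unset Printing Implicit Defensive.
Import Order.TTheory GRing.Theory Num.Theory.
Local Open Scope ring_scope.

Section Frob.
Variables (F : finFieldType) (q : nat).
Hypothesis HF : #|F| = (q ^ 2)%N.
Hypothesis Hq : odd q.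

Lemma pnat_card : exists2 p, p \in [pchar F] & p.-nat #|F|.
Proof.
have [p pp pc] := finPcharP F.
exists p => //.
have := abelem_pgroup (fin_ring_pchar_abelem pc).
by rewrite /pgroup cardsT.
Qed.

Lemma pnat_q : [pchar F].-nat q.
Proof.
have [p pc pn] := pnat_card.
move: pn; rewrite HF expnS expn1 pnatM => /andP[pn _].
by rewrite (eq_pnat _ (pcharf_eq pc)).
Qed.

Lemma FrD (x y : F) : (x + y) ^+ q = x ^+ q + y ^+ q.
Proof. exact: exprDn_pchar pnat_q. Qed.

Lemma FrK (x : F) : (x ^+ q) ^+ q = x.
Proof. by rewrite -exprM -[(q * q)%N]/((q^2)%N) -HF expf_card. Qed.

Lemma q_gt1 : (1 < q)%N.
Proof.
have := finNzRing_gt1 F; rewrite HF.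
by case: q => [|[|n]].
Qed.

Lemma FrN (x : F) : (- x) ^+ q = - x ^+ q.
Proof. by rewrite -mulN1r exprMn -signr_odd Hq expr1 mulN1r. Qed.

Lemma FrB (x y : F) : (x - y) ^+ q = x ^+ q - y ^+ q.
Proof. by rewrite FrD FrN. Qed.

Lemma FrM (x y : F) : (x * y) ^+ q = x ^+ q * y ^+ q.
Proof. exact: exprMn. Qed.

Lemma FrV (x : F) : (x^-1) ^+ q = (x ^+ q)^-1.
Proof. exact: exprVn. Qed.

Lemma Fr1 : (1 : F) ^+ q = 1.
Proof. exact: expr1n. Qed.

Lemma Fr0 : (0 : F) ^+ q = 0.
Proof. by rewrite expr0n; case: q q_gt1. Qed.

Lemma Frn (n : nat) : (n%:R : F) ^+ q = n%:R.
Proof. by elim: n => [|n IH]; rewrite ?Fr0 // -addn1 natrD FrD IH Fr1. Qed.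

Lemma two_neq0 : (2%:R : F) != 0.
Proof.
apply/negP => /eqP H2.
have c2 : (2%N \in [pchar F]) by rewrite inE /= H2 eqxx.
have q1 := q_gt1.
have := pnatPpi pnat_q (etrans (pi_pdiv q) q1).
rewrite (pcharf_eq c2) inE => /eqP Hp.
have := pdiv_dvd q; rewrite Hp => H.
by move: Hq; rewrite -[odd q]negbK -dvdn2 H.
Qed.

End Frob.

Lemma sq_fiber_le2 (F : finFieldType) (y : F) : (#|[set x : F | x ^+ 2 == y]| <= 2)%N.
Proof.
pose p : {poly F} := 'X^2 - y%:P.
have sp : size p = 3%N by rewrite /p size_polyDl ?size_polyXn // size_polyN size_polyC; case: (y != 0).
have pn0 : p != 0 by rewrite -size_poly_eq0 sp.
have := max_poly_roots pn0 _ (enum_uniq (pred_of_set [set x : F | x ^+ 2 == y])).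
rewrite sp -cardE ltnS; apply.
apply/allP => x; rewrite mem_enum inE => /eqP Hx.
by rewrite /root /p !hornerE Hx subrr.
Qed.

Lemma sq_img (F : finFieldType) : (#|F| < 2 * #|[set x ^+ 2 | x : F]|)%N.
Proof.
set S := [set x ^+ 2 | x : F].
have -> : #|F| = (\sum_(x in [set: F]) 1)%N by rewrite sum1_card cardsT.
rewrite (partition_big_imset (fun x : F => x ^+ 2)).
have -> : (fun x : F => x ^+ 2) @: [set: F] = S by apply/setP => z; apply/imsetP/imsetP => -[x _ ->]; exists x.
have S0 : (0 : F) \in S by apply/imsetP; exists 0; rewrite ?inE // expr0n.
rewrite (bigD1 (0:F)) //= (cardD1 (0:F) S) S0.
have -> : (\sum_(i in [set: F] | (i ^+ 2 == 0)%R) 1 = 1)%N.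
  rewrite (eq_bigl (pred1 (0:F))) ?big_pred1_eq // => x; rewrite inE /= expf_eq0 /=.
  by case: (x == 0).
have le : (\sum_(i in S | (i != 0)%R) \sum_(i0 in [set: F] | (i0 ^+ 2 == i)%R) 1 <=
          \sum_(i in S | (i != 0)%R) 2)%N.
  apply: leq_sum => y _.
  rewrite sum1_card.
  apply: leq_trans (sq_fiber_le2 y); apply: subset_leq_card.
  by apply/subsetP => x; rewrite !inE /= => /andP[].
rewrite sum_nat_const in le.
apply: (leq_ltn_trans (leq_add (leqnn 1) le)).
have -> : #|[pred i in S | (i != 0)%R]| = #|[predD1 S & 0%R]|.
  by apply: eq_card => x; rewrite !inE andbC.
rewrite /= mulnDr muln1; set k := #|_|.
lia.
Qed.

Lemma exists_sq (F : finFieldType) (l k : F) : l != 0 -> exists s w, l * s ^+ 2 + k = w ^+ 2.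
Proof.
move=> l0.
set S := [set x ^+ 2 | x : F].
set S1 := [set l * y + k | y in S].
have c1 : #|S1| = #|S| by apply: card_imset => a b /addIr /(mulfI l0).
have hU : (#|S1 :|: S| <= #|F|)%N := max_card _.
rewrite cardsU c1 in hU.
have := sq_img F; rewrite -/S => hS.
have : (0 < #|S1 :&: S|)%N.
  move: hU hS; set a := #|S1 :&: S|; set b := #|S|; set c := #|F|.
  lia.
rewrite card_gt0 => /set0Pn[z]; rewrite inE => /andP[/imsetP[y /imsetP[s _ Hy] Hz] /imsetP[w _ Hw]].
by exists s, w; rewrite -Hy -Hz Hw.
Qed.

Lemma exists_nonFq (F : finFieldType) (q : nat) : #|F| = (q ^ 2)%N -> (1 < q)%N ->
  exists x : F, x ^+ q != x.
Proof.
move=> HF q1.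
apply/existsP; rewrite -negb_forall; apply/negP => /forallP H.
pose p : {poly F} := 'X^q - 'X.
have sp : size p = q.+1 by rewrite /p size_polyDl ?size_polyXn // size_polyN size_polyX; lia.
have pn0 : p != 0 by rewrite -size_poly_eq0 sp.
have := max_poly_roots pn0 _ (enum_uniq F).
rewrite sp -cardE HF => /(_ _) H2.
have : (q ^ 2 < q.+1)%N.
  apply: H2; apply/allP => x _.
  by rewrite /root /p !hornerE (eqP (H x)) subrr.
rewrite ltnNge => /negP; apply; rewrite expnS expn1; nia.
Qed.

Section Coords.
Variable F : fieldType.

Definition i0 : 'I_3 := inord 0.
Definition i1 : 'I_3 := inord 1.
Definition i2 : 'I_3 := inord 2.

Lemma ord3_cases (i : 'I_3) : [\/ i = i0, i = i1 | i = i2].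
Proof.
case: i => [[|[|[|n]]] Hi]; rewrite /i0 /i1 /i2.
- by constructor 1; apply/val_inj; rewrite /= inordK.
- by constructor 2; apply/val_inj; rewrite /= inordK.
- by constructor 3; apply/val_inj; rewrite /= inordK.
- by [].
Qed.

Lemma vec3E0 (x y z : F) : vec3 x y z i0 0 = x.
Proof. by rewrite /vec3 mxE /i0 inordK. Qed.
Lemma vec3E1 (x y z : F) : vec3 x y z i1 0 = y.
Proof. by rewrite /vec3 mxE /i1 inordK. Qed.
Lemma vec3E2 (x y z : F) : vec3 x y z i2 0 = z.
Proof. by rewrite /vec3 mxE /i2 inordK. Qed.

Lemma vec3_eta (v : 'cV[F]_3) : v = vec3 (v i0 0) (v i1 0) (v i2 0).
Proof.
apply/matrixP => i j; rewrite (ord1 j).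
by case: (ord3_cases i) => ->; rewrite ?vec3E0 ?vec3E1 ?vec3E2.
Qed.

Lemma vec3_inj (x y z x' y' z' : F) : vec3 x y z = vec3 x' y' z' -> [/\ x = x', y = y' & z = z'].
Proof.
move=> H; split.
- by rewrite -(vec3E0 x y z) H vec3E0.
- by rewrite -(vec3E1 x y z) H vec3E1.
- by rewrite -(vec3E2 x y z) H vec3E2.
Qed.

Lemma vec3_scale (k x y z : F) : k *: vec3 x y z = vec3 (k * x) (k * y) (k * z).
Proof.
apply/matrixP => i j; rewrite (ord1 j) mxE.
by case: (ord3_cases i) => ->; rewrite ?vec3E0 ?vec3E1 ?vec3E2.
Qed.

Lemma vec3_eq0 (x y z : F) : (vec3 x y z == 0) = [&& x == 0, y == 0 & z == 0].
Proof.
apply/eqP/idP.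
- move=> H; have : vec3 x y z = vec3 0 0 0.
    rewrite H; apply/matrixP => i j; rewrite (ord1 j) mxE.
    by case: (ord3_cases i) => ->; rewrite ?vec3E0 ?vec3E1 ?vec3E2.
  by case/vec3_inj => -> -> ->; rewrite eqxx.
- case/and3P => /eqP -> /eqP -> /eqP ->.
  apply/matrixP => i j; rewrite (ord1 j) [RHS]mxE.
  by case: (ord3_cases i) => ->; rewrite ?vec3E0 ?vec3E1 ?vec3E2.
Qed.

Lemma big3 (f : 'I_3 -> F) : \sum_(i < 3) f i = f i0 + f i1 + f i2.
Proof.
rewrite !big_ord_recr big_ord0 /= add0r /i0 /i1 /i2.
by congr (f _ + f _ + f _); apply/val_inj; rewrite /= inordK.
Qed.

Lemma on_lineE (l : 'rV[F]_3) (v : 'cV[F]_3) :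
  on_line l v <-> l 0 i0 * v i0 0 + l 0 i1 * v i1 0 + l 0 i2 * v i2 0 = 0.
Proof.
rewrite /on_line; split.
- by move/matrixP => /(_ 0 0); rewrite !mxE big3.
- move=> H; apply/matrixP => i j; rewrite (ord1 i) (ord1 j) !mxE big3 H.
  by [].
Qed.

Lemma on_line3 (l : 'rV[F]_3) x y z :
  on_line l (vec3 x y z) <-> l 0 i0 * x + l 0 i1 * y + l 0 i2 * z = 0.
Proof. by rewrite on_lineE vec3E0 vec3E1 vec3E2. Qed.

Lemma row3_eq0 (l : 'rV[F]_3) : l 0 i0 = 0 -> l 0 i1 = 0 -> l 0 i2 = 0 -> l = 0.
Proof.
move=> h0 h1 h2; apply/matrixP => i j; rewrite (ord1 i) mxE.
by case: (ord3_cases j) => ->.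
Qed.

Lemma on_line_scale (l : 'rV[F]_3) (k : F) v : k != 0 -> (on_line l (k *: v) <-> on_line l v).
Proof.
move=> k0; rewrite /on_line -scalemxAr; split; last by move=> ->; rewrite scaler0.
by move/eqP; rewrite scaler_eq0 (negPf k0) /= => /eqP.
Qed.

Definition qf (M : 'M[F]_3) x y z :=
  x * (M i0 i0 * x + M i0 i1 * y + M i0 i2 * z) +
  y * (M i1 i0 * x + M i1 i1 * y + M i1 i2 * z) +
  z * (M i2 i0 * x + M i2 i1 * y + M i2 i2 * z).

Lemma qfE (M : 'M[F]_3) x y z :
  (vec3 x y z)^T *m M *m vec3 x y z = 0 <-> qf M x y z = 0.
Proof.
have E : ((vec3 x y z)^T *m M *m vec3 x y z) 0 0 = qf M x y z.
  rewrite !mxE big3 !mxE !big3 !mxE.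
  have e0 : [:: x; y; z]`_i0 = x by rewrite /i0 inordK.
  have e1 : [:: x; y; z]`_i1 = y by rewrite /i1 inordK.
  have e2 : [:: x; y; z]`_i2 = z by rewrite /i2 inordK.
  rewrite e0 e1 e2 /qf; ring.
split.
- by move/matrixP => /(_ 0 0); rewrite E mxE.
- move=> H; apply/matrixP => i j; rewrite (ord1 i) (ord1 j) E H mxE //.
Qed.

Lemma mulmx3 (M : 'M[F]_3) x y z :
  M *m vec3 x y z = vec3 (M i0 i0 * x + M i0 i1 * y + M i0 i2 * z)
                         (M i1 i0 * x + M i1 i1 * y + M i1 i2 * z)
                         (M i2 i0 * x + M i2 i1 * y + M i2 i2 * z).
Proof.
apply/matrixP => i j; rewrite (ord1 j) mxE big3 !vec3E0 !vec3E1 !vec3E2.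
by case: (ord3_cases i) => ->; rewrite ?vec3E0 ?vec3E1 ?vec3E2.
Qed.

Lemma kernel0 (M : 'M[F]_3) (v : 'cV[F]_3) : \det M != 0 -> M *m v = 0 -> v = 0.
Proof.
move=> d0 H.
have Mu : M \in unitmx by rewrite unitmxE unitfE.
by rewrite -(mulKmx Mu v) H mulmx0.
Qed.


End Coords.
Section SamePt.
Variable F : fieldType.
Implicit Types u v w : 'cV[F]_3.

Lemma same_pt_refl v : same_pt v v.
Proof. by exists 1; rewrite ?oner_eq0 ?scale1r. Qed.

Lemma same_pt_sym u v : same_pt u v -> same_pt v u.
Proof.
case=> k k0 ->; exists k^-1; rewrite ?invr_eq0 //.
by rewrite scalerA mulVf // scale1r.
Qed.

Lemma same_pt_trans u v w : same_pt u v -> same_pt v w -> same_pt u w.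
Proof.
case=> k k0 -> [k' k0' ->]; exists (k * k'); last by rewrite scalerA.
by rewrite mulf_neq0.
Qed.

Lemma same_pt_scale k v : k != 0 -> same_pt (k *: v) v.
Proof. by move=> k0; exists k. Qed.

Lemma same_pt_aff (x y x' y' : F) :
  same_pt (vec3 x y 1) (vec3 x' y' 1) -> x = x' /\ y = y'.
Proof.
case=> k k0; rewrite vec3_scale => /vec3_inj[-> ->]; rewrite mulr1 => <-.
by rewrite !mul1r.
Qed.

Lemma same_pt_aff_inf (x y : F) : ~ same_pt (vec3 x y 1) (vec3 0 1 0).
Proof.
case=> k k0; rewrite vec3_scale => /vec3_inj[_ _]; rewrite mulr0 => /eqP.
by rewrite oner_eq0.
Qed.

Lemma same_pt_ne0 u v : same_pt u v -> v != 0 -> u != 0.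
Proof. by case=> k k0 -> v0; rewrite scaler_eq0 negb_or k0. Qed.

Lemma normalize v : v i2 0 != 0 ->
  same_pt v (vec3 (v i0 0 / v i2 0) (v i1 0 / v i2 0) 1).
Proof.
move=> z0; exists (v i2 0) => //.
rewrite vec3_scale {1}(vec3_eta v) mulr1 !mulrA ![v i2 0 * _]mulrC -!mulrA divff // !mulr1.
done.
Qed.

Lemma same_pt_vec3_inv (x y z : F) : same_pt (vec3 x y z) (vec3 0 1 0) -> x = 0 /\ z = 0.
Proof. by case=> k _; rewrite vec3_scale => /vec3_inj[-> _ ->]; rewrite !mulr0. Qed.

Lemma same_pt_on_line (l : 'rV[F]_3) u v : same_pt u v -> on_line l v -> on_line l u.
Proof. by case=> k k0 ->; rewrite on_line_scale. Qed.

End SamePt.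

Section BM.
Variables (F : finFieldType) (q : nat).
Hypothesis HF : #|F| = (q ^ 2)%N.
Hypothesis Hq : odd q.
Variables a b : F.

Definition memU (x y : F) := inFq q (y - a * x ^+ 2 - b * x ^+ q.+1).

Lemma inFq0 : inFq q (0 : F).
Proof. exact: Fr0 HF. Qed.
Lemma inFq1 : inFq q (1 : F).
Proof. exact: Fr1. Qed.
Lemma inFqD {x y : F} : inFq q x -> inFq q y -> inFq q (x + y).
Proof. by rewrite /inFq FrD // => -> ->. Qed.
Lemma inFqB {x y : F} : inFq q x -> inFq q y -> inFq q (x - y).
Proof. by rewrite /inFq FrB // => -> ->. Qed.
Lemma inFqM {x y : F} : inFq q x -> inFq q y -> inFq q (x * y).
Proof. by rewrite /inFq FrM => -> ->. Qed.
Lemma inFqN (x : F) : inFq q (x ^+ q.+1).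
Proof. by rewrite /inFq exprS FrM FrK // mulrC. Qed.

Lemma BM_aff (x y : F) : BMset q a b (vec3 x y 1) <-> memU x y.
Proof.
split.
- case=> _ [[x' [r [Hr /same_pt_aff [-> ->]]]] | /same_pt_aff_inf //].
  rewrite /memU; suff -> : a * x' ^+ 2 + b * x' ^+ q.+1 + r - a * x' ^+ 2 - b * x' ^+ q.+1 = r by [].
  ring.
- move=> H; split; first by rewrite vec3_eq0 oner_eq0 !andbF.
  left; exists x, (y - a * x ^+ 2 - b * x ^+ q.+1); split => //.
  have -> : a * x ^+ 2 + b * x ^+ q.+1 + (y - a * x ^+ 2 - b * x ^+ q.+1) = y by ring.
  exact: same_pt_refl.
Qed.

Lemma BM_same (u v : 'cV[F]_3) : same_pt u v -> BMset q a b v -> BMset q a b u.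
Proof.
move=> suv [v0 H]; split; first exact: same_pt_ne0 suv v0.
case: H => [[x [r [Hr H]]] | H].
- by left; exists x, r; split => //; apply: same_pt_trans suv H.
- by right; apply: same_pt_trans suv H.
Qed.

Lemma BM_inf : BMset q a b (vec3 0 1 0).
Proof.
split; first by rewrite vec3_eq0 oner_eq0 !andbF.
by right; apply: same_pt_refl.
Qed.

Lemma BM_cases (v : 'cV[F]_3) : BMset q a b v ->
  (exists x y, memU x y /\ same_pt v (vec3 x y 1)) \/ same_pt v (vec3 0 1 0).
Proof.
case=> _ [[x [r [Hr H]]] | H]; last by right.
left; exists x, (a * x ^+ 2 + b * x ^+ q.+1 + r); split => //.
rewrite /memU; suff -> : a * x ^+ 2 + b * x ^+ q.+1 + r - a * x ^+ 2 - b * x ^+ q.+1 = r by [].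
ring.
Qed.

Lemma BM_z0 (x y : F) : BMset q a b (vec3 x y 0) -> x = 0.
Proof.
case/BM_cases => [[x' [y' [_ [k k0]]]] | /same_pt_vec3_inv [] //].
rewrite vec3_scale => /vec3_inj [_ _]; rewrite mulr1 => k00.
by move: k0; rewrite -k00 eqxx.
Qed.

End BM.

Section BMT.
Variables (F : finFieldType) (q : nat).
Hypothesis HF : #|F| = (q ^ 2)%N.
Hypothesis Hq : odd q.
Variables a b : F.

Lemma Frsq (x : F) : (x ^+ 2) ^+ q = (x ^+ q) ^+ 2.
Proof. exact: exprAC. Qed.

Lemma aniso (t : F) : BM_cond q a b -> t != 0 ->
  a * t ^+ 2 - (a * t ^+ 2) ^+ q + (b - b ^+ q) * (t * t ^+ q) != 0.
Proof.
move=> [_ Hns] t0; apply/negP => /eqP H.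
set w := a * t ^+ 2 in H; set e := b - b ^+ q in H; set n := t * t ^+ q in H.
have n0 : n != 0 by rewrite mulf_neq0 // expf_neq0.
have E1 : w ^+ q = w + e * n.
  apply/eqP; rewrite -subr_eq0.
  have -> : w ^+ q - (w + e * n) = - (w - w ^+ q + e * n) by ring.
  by rewrite H oppr0.
have E2 : w ^+ q = a ^+ q * (t ^+ q) ^+ 2 by rewrite /w FrM Frsq.
have E3 : w * (w + e * n) = a * a ^+ q * n ^+ 2.
  by rewrite -E1 E2 /w /n; ring.
apply: Hns; exists ((w + w ^+ q) / n); split.
- rewrite /inFq FrM FrV (FrD HF) (FrK HF) /n FrM (FrK HF).
  by rewrite addrC [t ^+ q * t]mulrC.
- apply: (mulIf (expf_neq0 2 n0)).
  rewrite exprMn -mulrA -exprMn mulVf // expr1n mulr1 (exprS a).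
  apply/eqP; rewrite -subr_eq0.
  have -> : (w + w ^+ q) ^+ 2 - ((b ^+ q - b) ^+ 2 + 4%:R * (a * a ^+ q)) * n ^+ 2
          = 4%:R * (w * (w + e * n) - a * a ^+ q * n ^+ 2).
    by rewrite E1 /e; ring.
  by rewrite E3 subrr mulr0.
Qed.

Lemma BMT (x1 y1 x y : F) : BM_cond q a b -> memU q a b x1 y1 -> memU q a b x y ->
  y = y1 + (2%:R * a * x1 + (b - b ^+ q) * x1 ^+ q) * (x - x1) -> x = x1.
Proof.
move=> Hc H1 H Hy; apply/eqP; rewrite -subr_eq0; apply/negPn/negP => t0.
have [t Ex] : exists t, x = x1 + t by exists (x - x1); rewrite addrC subrK.
have Et : x - x1 = t by rewrite Ex addrC addKr.
rewrite Et in t0 Hy; subst x y.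
have Hg := inFqB HF Hq H H1.
set m := 2%:R * a * x1 + (b - b ^+ q) * x1 ^+ q.
pose g := m * t - a * (2%:R * x1 * t + t ^+ 2) - b * (x1 ^+ q * t + x1 * t ^+ q + t * t ^+ q).
have Eg : y1 + m * t - a * (x1 + t) ^+ 2 - b * (x1 + t) ^+ q.+1 - (y1 - a * x1 ^+ 2 - b * x1 ^+ q.+1) = g.
  by rewrite /g (exprS (x1 + t) q) (exprS x1 q) (FrD HF x1 t); ring.
rewrite Eg in Hg.
have key : a * t ^+ 2 - (a * t ^+ 2) ^+ q + (b - b ^+ q) * (t * t ^+ q) = g ^+ q - g.
  rewrite /g /m.
  rewrite !(FrB HF Hq, FrD HF, FrM, Frn HF, FrK HF, Frsq).
  ring.
by move: (aniso Hc t0); rewrite key Hg subrr eqxx.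
Qed.

End BMT.

Section Core2.
Variables (F : finFieldType) (q : nat).
Hypothesis HF : #|F| = (q ^ 2)%N.
Hypothesis Hq : odd q.
Variables a b : F.
Hypothesis a0 : a != 0.
Hypothesis Hb : b ^+ q = b.

Lemma memU_b (x y : F) : memU q a b x y <-> inFq q (y - a * x ^+ 2).
Proof.
have Hn : inFq q (b * x ^+ q.+1) := inFqM Hb (inFqN HF x).
rewrite /memU; split => H.
- have -> : y - a * x ^+ 2 = (y - a * x ^+ 2 - b * x ^+ q.+1) + b * x ^+ q.+1 by ring.
  have HH := inFqD HF H Hn; exact HH.
- have HH := inFqB HF Hq H Hn; exact HH.
Qed.

Lemma pedal_pt (x0 y0 : F) (P : 'cV[F]_3) :
  pedal (BMset q a b) (vec3 x0 y0 1) P ->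
  exists x1, same_pt P (vec3 x1 (2%:R * a * x1 ^+ 2 - 2%:R * a * x0 * x1 + y0) 1).
Proof.
move=> [HP [l [[ln0 [v [Hv Hlv Huniq]]] HlQ HlP]]].
have sPv := Huniq P HP HlP.
move/on_line3: HlQ; rewrite mulr1 => HlQ.
set L0 := l 0 i0 in HlQ; set L1 := l 0 i1 in HlQ; set L2 := l 0 i2 in HlQ.
case: (BM_cases Hv) => [[x1 [y1 [Hm1 sv]]] | sv]; last first.
  have := same_pt_on_line (same_pt_sym sv) Hlv.
  move/on_line3; rewrite !mulr0 mulr1 add0r addr0 -/L1 => L10.
  pose w r := vec3 x0 (a * x0 ^+ 2 + b * x0 ^+ q.+1 + r) 1.
  have Hw r : inFq q r -> same_pt (w r) v.
    move=> Hr; apply: Huniq.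
    - apply/BM_aff; rewrite /memU.
      have -> : a * x0 ^+ 2 + b * x0 ^+ q.+1 + r - a * x0 ^+ 2 - b * x0 ^+ q.+1 = r by ring.
      exact Hr.
    - by apply/on_line3; rewrite -/L0 -/L1 -/L2 L10 mul0r mulr1 addr0 -HlQ L10 mul0r addr0.
  have := same_pt_trans (Hw 0 (inFq0 HF)) (same_pt_sym (Hw 1 (inFq1 _ _))).
  case/same_pt_aff => _ /addrI /eqP; by rewrite eq_sym oner_eq0.
have HA : L0 * x1 + L1 * y1 + L2 = 0.
  by have := same_pt_on_line (same_pt_sym sv) Hlv; move/on_line3; rewrite mulr1.
have L1n0 : L1 != 0.
  apply/negP => /eqP L10.
  have : same_pt (vec3 x1 (y1 + 1) 1) v.
    apply: Huniq.
    - apply/BM_aff; rewrite /memU.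
      have -> : y1 + 1 - a * x1 ^+ 2 - b * x1 ^+ q.+1 = (y1 - a * x1 ^+ 2 - b * x1 ^+ q.+1) + 1 by ring.
      have HH := inFqD HF Hm1 (inFq1 F q); exact HH.
    - by apply/on_line3; rewrite -/L0 -/L1 -/L2 L10 mul0r addr0 mulr1 -HA L10 mul0r addr0.
  move=> s; case: (same_pt_aff (same_pt_trans s sv)) => _ /eqP.
  by rewrite -subr_eq0 addrAC subrr add0r oner_eq0.
have Hm : L0 = - (2%:R * a * x1) * L1.
  set m := - L0 / L1.
  have HL0 : L0 = - m * L1 by rewrite /m -mulNr opprK mulfVK.
  suff Hm2 : m = 2%:R * a * x1 by rewrite HL0 Hm2.
  apply/eqP; rewrite -subr_eq0; apply/negPn/negP => c0.
  set c := m - 2%:R * a * x1 in c0.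
  set t := c / a.
  have t0 : t != 0 by rewrite /t mulf_neq0 // invr_eq0.
  have : same_pt (vec3 (x1 + t) (y1 + m * t) 1) v.
    apply: Huniq.
    - apply/BM_aff; apply/memU_b.
      move/memU_b: Hm1 => Hm1.
      have -> : y1 + m * t - a * (x1 + t) ^+ 2 = (y1 - a * x1 ^+ 2) + (c * t - a * t ^+ 2).
        by rewrite /c; ring.
      have -> : c * t - a * t ^+ 2 = 0 by rewrite /t; field.
      by rewrite addr0.
    - apply/on_line3; rewrite -/L0 -/L1 -/L2 mulr1.
      have -> : L0 * (x1 + t) + L1 * (y1 + m * t) + L2 = (L0 * x1 + L1 * y1 + L2) + t * (L0 + m * L1) by ring.
      by rewrite HA HL0 add0r; apply/eqP; rewrite mulf_eq0; apply/orP; right; apply/eqP; ring.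
  move=> s; case: (same_pt_aff (same_pt_trans s sv)) => /eqP.
  by rewrite -subr_eq0 addrC addKr (negPf t0).
have Hy1 : y1 = 2%:R * a * x1 ^+ 2 - 2%:R * a * x0 * x1 + y0.
  have h : L1 * (2%:R * a * x1 ^+ 2 - 2%:R * a * x0 * x1 + y0 - y1) = (L0 * x0 + L1 * y0 + L2) - (L0 * x1 + L1 * y1 + L2).
    by rewrite Hm; ring.
  rewrite HlQ HA subrr in h.
  move/eqP: h; rewrite mulf_eq0 (negPf L1n0) /= subr_eq0 => /eqP ->.
  by [].
exists x1; rewrite -Hy1.
exact: same_pt_trans sPv sv.
Qed.

Lemma core2_arc (x0 y0 : F) : is_arc (pedal (BMset q a b) (vec3 x0 y0 1)).
Proof.
move=> l u v w ln0 Pu Pv Pw lu lv lw.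
have [x1 su] := pedal_pt Pu.
have [x2 sv] := pedal_pt Pv.
have [x3 sw] := pedal_pt Pw.
set f := fun x => 2%:R * a * x ^+ 2 - 2%:R * a * x0 * x + y0.
have E x (P : 'cV[F]_3) : same_pt P (vec3 x (f x) 1) -> on_line l P ->
    l 0 i0 * x + l 0 i1 * f x + l 0 i2 = 0.
  by move=> sP lP; have := same_pt_on_line (same_pt_sym sP) lP; move/on_line3; rewrite mulr1.
have E1 := E _ _ su lu; have E2 := E _ _ sv lv; have E3 := E _ _ sw lw.
case: (eqVneq x1 x2) => [e12 | n12].
  by constructor 1; rewrite e12 in su; exact: same_pt_trans su (same_pt_sym sv).
case: (eqVneq x2 x3) => [e23 | n23].
  by constructor 2; rewrite e23 in sv; exact: same_pt_trans sv (same_pt_sym sw).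
case: (eqVneq x1 x3) => [e13 | n13].
  by constructor 3; rewrite e13 in su; exact: same_pt_trans su (same_pt_sym sw).
exfalso; move/eqP: ln0; apply.
set L0 := l 0 i0 in E1 E2 E3; set L1 := l 0 i1 in E1 E2 E3; set L2 := l 0 i2 in E1 E2 E3.
have K xa xb : xa != xb -> L0 * xa + L1 * f xa + L2 = 0 -> L0 * xb + L1 * f xb + L2 = 0 ->
    L0 + L1 * (2%:R * a * (xa + xb) - 2%:R * a * x0) = 0.
  move=> nab Ea Eb.
  have h : (xa - xb) * (L0 + L1 * (2%:R * a * (xa + xb) - 2%:R * a * x0)) =
           (L0 * xa + L1 * f xa + L2) - (L0 * xb + L1 * f xb + L2) by rewrite /f; ring.
  move: h; rewrite Ea Eb subrr => /eqP; rewrite mulf_eq0 subr_eq0 (negPf nab) /=.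
  by move/eqP.
have K12 := K _ _ n12 E1 E2; have K13 := K _ _ n13 E1 E3.
have h : 2%:R * a * L1 * (x2 - x3) = (L0 + L1 * (2%:R * a * (x1 + x2) - 2%:R * a * x0)) -
    (L0 + L1 * (2%:R * a * (x1 + x3) - 2%:R * a * x0)) by ring.
rewrite K12 K13 subrr in h.
have L10 : L1 = 0.
  move/eqP: h; rewrite !mulf_eq0 subr_eq0 (negPf n23) (negPf a0) (negPf (two_neq0 HF Hq)) /=.
  by rewrite orbF => /eqP.
have L00 : L0 = 0 by move: K12; rewrite L10 mul0r addr0.
have L20 : L2 = 0 by move: E1; rewrite L10 L00 !mul0r !add0r.
exact: row3_eq0.
Qed.

End Core2.

Section Core1.
Variables (F : finFieldType) (q : nat).
Hypothesis HF : #|F| = (q ^ 2)%N.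
Hypothesis Hq : odd q.
Variables a b : F.
Hypothesis Hc : BM_cond q a b.

Lemma core1 (M : 'M[F]_3) : M^T = M -> \det M != 0 ->
  (forall w, w != 0 -> w^T *m M *m w = 0 -> BMset q a b w) -> b ^+ q = b.
Proof.
move=> HT Hd H.
have sym i j : M j i = M i j by rewrite -{2}HT mxE.
set p00 : F := M i0 i0; set p11 : F := M i1 i1; set p22 : F := M i2 i2.
set p01 : F := M i0 i1; set p02 : F := M i0 i2; set p12 : F := M i1 i2.
have Phi x y z : qf M x y z = p00 * x ^+ 2 + p11 * y ^+ 2 + p22 * z ^+ 2 +
    2%:R * p01 * x * y + 2%:R * p02 * x * z + 2%:R * p12 * y * z.
  by rewrite /qf (sym i0 i1) (sym i0 i2) (sym i1 i2) -/p00 -/p11 -/p22 -/p01 -/p02 -/p12; ring.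
have Mv x y z : M *m vec3 x y z = vec3 (p00 * x + p01 * y + p02 * z)
    (p01 * x + p11 * y + p12 * z) (p02 * x + p12 * y + p22 * z).
  by rewrite mulmx3 (sym i0 i1) (sym i0 i2) (sym i1 i2).
have two0 := two_neq0 HF Hq.
have Hinf k : p00 + 2%:R * p01 * k + p11 * k ^+ 2 != 0.
  apply/negP => /eqP Hk.
  have : BMset q a b (vec3 1 k 0).
    apply: H; first by rewrite vec3_eq0 oner_eq0.
    by apply/qfE; rewrite Phi; transitivity (p00 + 2%:R * p01 * k + p11 * k ^+ 2); [ring | exact Hk].
  by move/BM_z0/eqP; rewrite oner_eq0.
have Haff x y : p00 * x ^+ 2 + 2%:R * p01 * x * y + p11 * y ^+ 2 + 2%:R * p02 * x + 2%:R * p12 * y + p22 = 0 ->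
    memU q a b x y.
  move=> Hxy; apply/(BM_aff q a b x y); apply: H; first by rewrite vec3_eq0 oner_eq0 !andbF.
  apply/qfE; rewrite Phi; rewrite -[RHS]Hxy; ring.
set m := fun x => 2%:R * a * x + (b - b ^+ q) * x ^+ q.
have Tang x y : p00 * x ^+ 2 + 2%:R * p01 * x * y + p11 * y ^+ 2 + 2%:R * p02 * x + 2%:R * p12 * y + p22 = 0 ->
    (p00 * x + p01 * y + p02) + m x * (p01 * x + p11 * y + p12) = 0.
  move=> Hxy.
  set g := (p00 * x + p01 * y + p02) + m x * (p01 * x + p11 * y + p12).
  have c20 := Hinf (m x).
  set c2 := p00 + 2%:R * p01 * m x + p11 * m x ^+ 2 in c20.
  set t := - (2%:R * g) / c2.
  have Hm1 := Haff x y Hxy.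
  have Hm2 : memU q a b (x + t) (y + m x * t).
    apply: Haff.
    have -> : p00 * (x + t) ^+ 2 + 2%:R * p01 * (x + t) * (y + m x * t) + p11 * (y + m x * t) ^+ 2 +
        2%:R * p02 * (x + t) + 2%:R * p12 * (y + m x * t) + p22 =
        (p00 * x ^+ 2 + 2%:R * p01 * x * y + p11 * y ^+ 2 + 2%:R * p02 * x + 2%:R * p12 * y + p22)
        + t * (2%:R * g + t * c2) by rewrite /g /c2; ring.
    rewrite Hxy add0r /t; apply/eqP; rewrite mulf_eq0; apply/orP; right; apply/eqP.
    by field.
  have := BMT HF Hq Hc Hm1 Hm2.
  have -> : y + m x * t = y + (2%:R * a * x + (b - b ^+ q) * x ^+ q) * (x + t - x) by rewrite /m; ring.
  move=> /(_ erefl) /eqP; rewrite addrC -subr_eq0 addrK /t mulf_eq0 invr_eq0 (negPf c20) orbF.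
  by rewrite oppr_eq0 mulf_eq0 (negPf two0) /= => /eqP.
have Mz (v : 'cV[F]_3) : M *m v = 0 -> v = 0 := kernel0 Hd.
case: (eqVneq p11 0) => [p110 | p11n0].
- (* parabola case *)
  have p010 : p01 = 0.
    apply/eqP/negPn/negP => p01n0.
    have := Hinf (- p00 / (2%:R * p01)); rewrite p110 mul0r addr0.
    suff -> : p00 + 2%:R * p01 * (- p00 / (2%:R * p01)) = 0 by rewrite eqxx.
    by field; rewrite p01n0 two0.
  have p12n0 : p12 != 0.
    apply/negP => /eqP p120.
    have := Mz (vec3 0 1 0); rewrite Mv p010 p110 p120 !mulr0 !mulr1 !addr0.
    have -> : vec3 (0 : F) 0 0 = 0 by apply/eqP; rewrite vec3_eq0 !eqxx.
    by move=> /(_ erefl) /eqP; rewrite vec3_eq0 oner_eq0 !andbF.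
  have p00n0 : p00 != 0.
    apply/negP => /eqP p000.
    have := Mz (vec3 p12 (- p02) 0); rewrite Mv p010 p110 p000.
    have -> : vec3 (0 * p12 + 0 * - p02 + p02 * 0) (0 * p12 + 0 * - p02 + p12 * 0)
        (p02 * p12 + p12 * - p02 + p22 * 0) = 0.
      by apply/eqP; rewrite vec3_eq0; apply/and3P; split; apply/eqP; ring.
    by move=> /(_ erefl) /eqP; rewrite vec3_eq0 (negPf p12n0).
  have T x : (p00 * x + p02) + m x * p12 = 0.
    pose y := - (p00 * x ^+ 2 + 2%:R * p02 * x + p22) / (2%:R * p12).
    have := Tang x y; rewrite p010 p110.
    have -> : p00 * x ^+ 2 + 2%:R * 0 * x * y + 0 * y ^+ 2 + 2%:R * p02 * x + 2%:R * p12 * y + p22 = 0.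
      by rewrite /y; field; rewrite p12n0 two0.
    by move=> /(_ erefl); rewrite !mul0r !add0r !addr0.
  have T0 : p02 = 0.
    have := T 0; rewrite /m /= (Fr0 HF) => E0.
    by rewrite -[RHS]E0; ring.
  have T1 := T 1; rewrite /m /= Fr1 in T1.
  have [xi Hxi] := exists_nonFq HF (q_gt1 HF).
  have Tx := T xi; rewrite /m /= in Tx.
  have h : (b - b ^+ q) * p12 * (xi ^+ q - xi) =
     (p00 * xi + p02 + (2%:R * a * xi + (b - b ^+ q) * xi ^+ q) * p12)
     - xi * (p00 * 1 + p02 + (2%:R * a * 1 + (b - b ^+ q) * 1) * p12) + (xi - 1) * p02 by ring.
  rewrite Tx T1 T0 mulr0 subrr mulr0 addr0 in h.
  move/eqP: h; rewrite !mulf_eq0 (negPf p12n0) !subr_eq0 (negPf Hxi) !orbF.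
  by move/eqP => Hb; rewrite -Hb.
- (* ellipse case: contradiction *)
  exfalso.
  set Phi2 := fun x y => p00 * x ^+ 2 + 2%:R * p01 * x * y + p11 * y ^+ 2 + 2%:R * p02 * x + 2%:R * p12 * y + p22.
  have lam0 : p01 ^+ 2 - p11 * p00 != 0.
    apply/negP => /eqP l0.
    have := Hinf (- p01 / p11).
    have -> : p00 + 2%:R * p01 * (- p01 / p11) + p11 * (- p01 / p11) ^+ 2 = - (p01 ^+ 2 - p11 * p00) / p11.
      by field; rewrite ?p11n0.
    by rewrite l0 oppr0 mul0r eqxx.
  have Lx x y : Phi2 x y = 0 -> (p11 * p00 - p01 ^+ 2) * x + (p11 * p02 - p01 * p12) = 0.
    move=> Hxy.
    pose y' := - (2%:R * (p01 * x + p12)) / p11 - y.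
    have Hxy' : Phi2 x y' = 0.
      by rewrite -[RHS]Hxy /Phi2 /y'; field.
    have T1 := Tang x y Hxy; have T2 := Tang x y' Hxy'.
    set mx := m x in T1 T2.
    have -> : (p11 * p00 - p01 ^+ 2) * x + (p11 * p02 - p01 * p12) =
      p11 / 2%:R * ((p00 * x + p01 * y + p02 + mx * (p01 * x + p11 * y + p12)) +
                    (p00 * x + p01 * y' + p02 + mx * (p01 * x + p11 * y' + p12))).
      by rewrite /y'; field; rewrite ?p11n0 ?two0.
    by rewrite T1 T2 addr0 mulr0.
  set lam := p01 ^+ 2 - p11 * p00.
  set mu := p01 * p12 - p11 * p02.
  set nu := p12 ^+ 2 - p11 * p22.
  have [s [w Hsw]] := exists_sq (nu - mu ^+ 2 / lam) lam0.
  pose x0 := s - mu / lam.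
  pose y0 := (w - p01 * x0 - p12) / p11.
  have H0 : Phi2 x0 y0 = 0.
    have -> : Phi2 x0 y0 = (w ^+ 2 - (lam * s ^+ 2 + (nu - mu ^+ 2 / lam))) / p11.
      by rewrite /Phi2 /y0 /x0 /lam /mu /nu /=; field; rewrite ?p11n0 ?lam0.
    by rewrite Hsw subrr mul0r.
  set g1 := p00 * x0 + p01 * y0 + p02.
  set g2 := p01 * x0 + p11 * y0 + p12.
  have notboth : ~ (g1 = 0 /\ g2 = 0).
    move=> [G1 G2].
    have G3 : p02 * x0 + p12 * y0 + p22 = 0.
      have -> : p02 * x0 + p12 * y0 + p22 = Phi2 x0 y0 - x0 * g1 - y0 * g2 by rewrite /Phi2 /g1 /g2; ring.
      by rewrite H0 G1 G2 !mulr0 !subr0.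
    have := Mz (vec3 x0 y0 1); rewrite Mv !mulr1 -/g1 -/g2 G1 G2 G3.
    have -> : vec3 (0 : F) 0 0 = 0 by apply/eqP; rewrite vec3_eq0 !eqxx.
    by move=> /(_ erefl) /eqP; rewrite vec3_eq0 oner_eq0 !andbF.
  have [k Hk] : exists k, g1 + k * g2 != 0.
    case: (eqVneq g1 0) => [G1 | G1]; last by exists 0; rewrite mul0r addr0.
    exists 1; rewrite G1 add0r mul1r; apply/negP => /eqP G2; exact: notboth.
  have c20 := Hinf k.
  set c2 := p00 + 2%:R * p01 * k + p11 * k ^+ 2 in c20.
  pose t := - (2%:R * (g1 + k * g2)) / c2.
  have t0 : t != 0 by rewrite /t mulf_neq0 ?invr_eq0 // oppr_eq0 mulf_neq0.
  have H1 : Phi2 (x0 + t) (y0 + k * t) = 0.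
    have -> : Phi2 (x0 + t) (y0 + k * t) = Phi2 x0 y0 + t * (2%:R * (g1 + k * g2) + t * c2).
      by rewrite /Phi2 /g1 /g2 /c2; ring.
    rewrite H0 add0r; apply/eqP; rewrite mulf_eq0; apply/orP; right; apply/eqP.
    by rewrite /t; field; rewrite ?c20.
  have L0 := Lx _ _ H0; have L1 := Lx _ _ H1.
  have : (p11 * p00 - p01 ^+ 2) * t = 0.
    have -> : (p11 * p00 - p01 ^+ 2) * t = ((p11 * p00 - p01 ^+ 2) * (x0 + t) + (p11 * p02 - p01 * p12))
        - ((p11 * p00 - p01 ^+ 2) * x0 + (p11 * p02 - p01 * p12)) by ring.
    by rewrite L0 L1 subrr.
  move/eqP; rewrite mulf_eq0 (negPf t0) orbF.
  have -> : p11 * p00 - p01 ^+ 2 = - lam by rewrite /lam; ring.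
  by rewrite oppr_eq0 (negPf lam0).
Qed.

End Core1.

Section Transfer.
Variables (F : finFieldType) (q : nat) (a b : F) (A : 'M[F]_3) (s : {rmorphism F -> F}) (g : F -> F).
Hypothesis sK : cancel s g.
Hypothesis gK : cancel g s.
Hypothesis Au : A \in unitmx.
Variable U : pset F.
Hypothesis HU : forall v, U v <-> coll_image A s (BMset q a b) v.

Local Notation BM := (BMset q a b).
Definition phi (w : 'cV[F]_3) := A *m map_mx s w.

Lemma mapsg m n (X : 'M[F]_(m, n)) : map_mx s (map_mx g X) = X.
Proof. by apply/matrixP => i j; rewrite !mxE gK. Qed.

Lemma A_inj m (X Y : 'M[F]_(3, m)) : A *m X = A *m Y -> X = Y.
Proof. by move=> H; rewrite -(mulKmx Au X) H mulKmx. Qed.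

Lemma phi_ne0 w : w != 0 -> phi w != 0.
Proof.
move=> w0; apply/eqP => H.
have : A *m map_mx s w = A *m 0 by rewrite mulmx0.
by move/A_inj/eqP; rewrite map_mx_eq0 (negPf w0).
Qed.

Lemma phi_scale k w : phi (k *: w) = s k *: phi w.
Proof. by rewrite /phi map_mxZ scalemxAr. Qed.

Lemma phi_inj u v : phi u = phi v -> u = v.
Proof. by move/A_inj/map_mx_inj. Qed.

Lemma g_ne0 k : k != 0 -> g k != 0.
Proof. by move=> k0; apply: contraNneq k0 => gk0; rewrite -[k]gK gk0 rmorph0. Qed.

Lemma phi_same u v : same_pt (phi u) (phi v) -> same_pt u v.
Proof.
case=> k k0 H; exists (g k); first exact: g_ne0.
by apply: phi_inj; rewrite phi_scale gK.
Qed.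

Lemma phi_same_fwd u v : same_pt u v -> same_pt (phi u) (phi v).
Proof. by case=> k k0 ->; exists (s k); rewrite ?fmorph_eq0 // phi_scale. Qed.

Lemma U_phi w : U (phi w) <-> BM w.
Proof.
rewrite HU; split.
- case=> _ [w' [Hw' s']]; apply: BM_same (phi_same s') Hw'.
- move=> Hw; split; first by apply: phi_ne0; case: Hw.
  by exists w; split => //; apply: same_pt_refl.
Qed.

Lemma U_inv v : U v -> exists w, BM w /\ same_pt v (phi w).
Proof. by rewrite HU => -[_ [w [Hw sv]]]; exists w. Qed.

Definition lam (l : 'rV[F]_3) := map_mx g (l *m A).

Lemma lam_on l w : on_line l (phi w) <-> on_line (lam l) w.
Proof.
rewrite /on_line /phi /lam mulmxA.
have -> : l *m A *m map_mx s w = map_mx s (map_mx g (l *m A) *m w) by rewrite map_mxM mapsg.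
split => H; last by rewrite H; apply/eqP; rewrite map_mx_eq0.
by apply/eqP; rewrite -(map_mx_eq0 s) H.
Qed.

Lemma lam_ne0 l : l != 0 -> lam l != 0.
Proof.
move=> l0; apply/negP; rewrite /lam => /eqP H.
have H2 : l *m A = 0 by rewrite -(mapsg (l *m A)) H; apply/eqP; rewrite map_mx_eq0.
by move: l0; rewrite -(mulmxK Au l) H2 mul0mx eqxx.
Qed.

Lemma tangent_transfer l : tangent U l -> tangent BM (lam l).
Proof.
case=> l0 [v [Uv lv Hun]]; split; first exact: lam_ne0.
have [v' [Bv' sv]] := U_inv Uv.
exists v'; split => //.
- by apply/lam_on; apply: same_pt_on_line (same_pt_sym sv) lv.
- move=> w Bw lw.
  have := Hun (phi w) (proj2 (U_phi w) Bw) (proj2 (lam_on l w) lw).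
  by move=> swv; apply: phi_same; apply: same_pt_trans swv sv.
Qed.

Lemma pedal_transfer Q' P : pedal U (phi Q') P ->
  exists P', same_pt P (phi P') /\ pedal BM Q' P' /\
    forall l, on_line l P -> on_line (lam l) P'.
Proof.
case=> UP [l [tl lQ lP]].
have [P' [BP' sP]] := U_inv UP.
exists P'; split => //; split.
- split => //; exists (lam l); split.
  + exact: tangent_transfer.
  + by apply/lam_on.
  + by apply/lam_on; apply: same_pt_on_line (same_pt_sym sP) lP.
- by move=> l' lP'; apply/lam_on; apply: same_pt_on_line (same_pt_sym sP) lP'.
Qed.

Lemma arc_transfer Q' : is_arc (pedal BM Q') -> is_arc (pedal U (phi Q')).
Proof.
move=> Harc l u v w l0 Pu Pv Pw lu lv lw.
have [u' [su [Pu' Hu]]] := pedal_transfer Pu.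
have [v' [sv [Pv' Hv]]] := pedal_transfer Pv.
have [w' [sw [Pw' Hw]]] := pedal_transfer Pw.
have tr x y x' y' : same_pt x (phi x') -> same_pt y (phi y') -> same_pt x' y' -> same_pt x y.
  move=> sx sy sxy; apply: same_pt_trans sx _; apply: same_pt_trans (phi_same_fwd sxy) _.
  exact: same_pt_sym.
case: (Harc (lam l) u' v' w' (lam_ne0 l0) Pu' Pv' Pw' (Hu _ lu) (Hv _ lv) (Hw _ lw)).
- by move=> h; constructor 1; apply: tr su sv h.
- by move=> h; constructor 2; apply: tr sv sw h.
- by move=> h; constructor 3; apply: tr su sw h.
Qed.

End Transfer.

Lemma pedal_same (F : fieldType) (S : pset F) (Q1 Q2 P : 'cV[F]_3) :
  same_pt Q1 Q2 -> pedal S Q2 P -> pedal S Q1 P.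
Proof.
move=> sQ [SP [l [tl lQ lP]]]; split => //; exists l; split => //.
exact: same_pt_on_line sQ lQ.
Qed.

Lemma arc_sub (F : fieldType) (S1 S2 : pset F) :
  (forall P, S1 P -> S2 P) -> is_arc S2 -> is_arc S1.
Proof. by move=> H Ha l u v w l0 Su Sv Sw; apply: Ha; rewrite // ; apply: H. Qed.

Theorem theorem2p9 (F : finFieldType) (q : nat) :
  #|F| = (q ^ 2)%N -> odd q ->
  forall U : pset F, conicBM q U ->
  forall Q : 'cV[F]_3, Q != 0 -> ~ U Q -> zc Q != 0 ->
  is_arc (pedal U Q).
Proof.
move=> HF Hq U [[a [b [A [s [Hc Au Afix HU]]]]] [M [MT Md MU]]] Q Q0 UQ zQ.
have [g sK gK] : bijective s := injF_bij (fmorph_inj s).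
pose N := A^T *m M *m A.
pose M' := map_mx g N.
have NT : N^T = N by rewrite /N !trmx_mul trmxK MT mulmxA.
have M'T : M'^T = M' by rewrite /M' map_trmx NT.
have dA : \det A != 0 by rewrite -unitfE -unitmxE.
have dM' : \det M' != 0.
  apply/negP => /eqP d0.
  have : \det N = 0.
    by rewrite -(mapsg gK N) det_map_mx -/M' d0 rmorph0.
  by apply/eqP; rewrite /N !det_mulmx det_tr !mulf_neq0.
have HM' w : w != 0 -> w^T *m M' *m w = 0 -> BMset q a b w.
  move=> w0 Hw; apply/(U_phi gK Au HU); apply: MU; split; first by have HH := phi_ne0 s Au w0; exact HH.
  have E : map_mx s (w^T *m M' *m w) = (phi A s w)^T *m M *m phi A s w.
    rewrite !map_mxM -map_trmx /M' mapsg // /phi /N trmx_mul !mulmxA.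
    done.
  by rewrite -E Hw; apply/eqP; rewrite map_mx_eq0.
have Hb : b ^+ q = b := core1 HF Hq Hc M'T dM' HM'.
have a0 : a != 0.
  apply/negP => /eqP a00; case: Hc => _ []; exists 0; split; first exact: inFq0 HF.
  by rewrite a00 Hb subrr expr0n /= expr0n /= mulr0 addr0.
pose Q' := map_mx g (invmx A *m Q).
have EQ : phi A s Q' = Q by rewrite /phi /Q' mapsg // mulKVmx.
have zQ' : Q' i2 0 != 0.
  apply: contraNneq zQ => z0; rewrite -EQ /phi.
  have HH : zc (map_mx s Q') = 0 by rewrite /zc mxE -/i2 z0 rmorph0.
  by have := Afix _ HH; move=> ->.
have sQ := normalize zQ'.
set x0 := Q' i0 0 / Q' i2 0 in sQ; set y0 := Q' i1 0 / Q' i2 0 in sQ.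
have Harc := @core2_arc _ _ HF Hq _ _ a0 Hb x0 y0.
have Harc' : is_arc (pedal (BMset q a b) Q').
  by apply: arc_sub Harc => P; apply: pedal_same; apply: same_pt_sym.
by rewrite -EQ; apply: (arc_transfer gK Au HU).
Qed.
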